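(* Let $k$ be a field of characteristic $2$, $g = x^2+y^2z+yz^2+xyz$, $m\ge 0$, $R_m = k[x_0,\dots,x_m,y_0,\dots,y_m,z_0,\dots,z_m]$. For positive integers $p,q,r\le m+1$ set $\mathbf{x}_p=\sum_{i=p}^m x_it^i$, $\mathbf{y}_q=\sum_{i=q}^m y_it^i$, $\mathbf{z}_r=\sum_{i=r}^m z_it^i$, and define $G_{pqr}^{(l)}\in R_m$ ($0\le l\le m$) by $g(\mathbf{x}_p,\mathbf{y}_q,\mathbf{z}_r)=\sum_{l=0}^m G_{pqr}^{(l)}t^l$ in $R_m[t]/\langle t^{m+1}\rangle$. Then for $0\le l\le m$, $$G_{pqr}^{(l)} = \sum_{u\ge p,\,2u=l} x_u^2 + \sum_{v\ge q,\,w\ge r,\,2v+w=l} y_v^2z_w + \sum_{v\ge q,\,w\ge r,\,v+2w=l} y_vz_w^2 + \sum_{u\ge p,\,v\ge q,\,w\ge r,\,u+v+w=l} x_uy_vz_w$$ (empty sums being $0$). Furthermore: (1) If $l<2p$, $l<2q+r$ and $l<q+2r$, then $G_{pqr}^{(l)}=0$. (2) If $l=2p$, $l<2q+r$ and $l<q+2r$, then $G_{pqr}^{(l)}=x_p^2$. (3) If $p>q=r$ and $l=2p=3q$, then $G_{pqq}^{(l)}=x_p^2+y_q^2z_q+y_qz_q^2$. (4) If $p\ge q>r$ and $l\ge 2p=q+2r$, then $T_y(G_{pqr}^{(l)})=y_{l-2r}z_r^2$. (5) If $p\ge r>q$ and $l\ge 2p=2q+r$, then $T_z(G_{pqr}^{(l)})=y_q^2z_{l-2q}$.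 (6) If $p>q=r$ and $l>3q$, then $T_y(G_{pqq}^{(l)})=y_{l-2q}z_q^2$. (7) If $p>q=r$ and $l>3q$, then $T_z(G_{pqq}^{(l)})=y_q^2z_{l-2q}$.
   Context: For $h\in R_m$, let $i_0$ be the largest index $i$ such that $y_i$ occurs in $h$; $T_y(h)$ denotes the sum of the terms (monomials with their coefficients) of $h$ containing $y_{i_0}$. $T_z(h)$ is defined analogously with the variables $z_i$. *)

(* Defs.v *)
From mathcomp Require Import all_boot all_order all_algebra.
From mathcomp Require Import mpoly.
Set Implicit Arguments. Unset Strict Implicit. Unset Printing Implicit Defensive.
Import GRing.Theory.
Local Open Scope ring_scope.

(* The ring R_m = k[x_0..x_m, y_0..y_m, z_0..z_m], realised as an mpoly ring
   in (m+1)+(m+1)+(m+1) variables: x_i, y_i, z_i are blocks 1, 2, 3. *)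
Notation nv m := (m.+1 + m.+1 + m.+1)%N.
Notation Rm k m := {mpoly k[nv m]}.

Definition xidx (m : nat) (i : 'I_m.+1) : 'I_(nv m) := lshift m.+1 (lshift m.+1 i).
Definition yidx (m : nat) (i : 'I_m.+1) : 'I_(nv m) := lshift m.+1 (rshift m.+1 i).
Definition zidx (m : nat) (i : 'I_m.+1) : 'I_(nv m) := rshift (m.+1 + m.+1) i.

Definition xv (k : fieldType) (m : nat) (i : 'I_m.+1) : Rm k m := 'X_(xidx i).
Definition yv (k : fieldType) (m : nat) (i : 'I_m.+1) : Rm k m := 'X_(yidx i).
Definition zv (k : fieldType) (m : nat) (i : 'I_m.+1) : Rm k m := 'X_(zidx i).

Definition tser (k : fieldType) (m : nat) (v : 'I_m.+1 -> Rm k m) (p : nat)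
  : {poly Rm k m} := \sum_(i < m.+1 | (p <= i)%N) (v i)%:P * 'X^i.

Definition gpoly (S : comRingType) (x y z : S) : S :=
  x ^+ 2 + y ^+ 2 * z + y * z ^+ 2 + x * y * z.

(* G_{pqr}^{(l)}: the coefficient of t^l (l <= m, so this equals the
   coefficient in R_m[t]/<t^{m+1}>). *)
Definition Gpqr (k : fieldType) (m p q r l : nat) : Rm k m :=
  (gpoly (tser (@xv k m) p) (tser (@yv k m) q) (tser (@zv k m) r))`_l.

Definition occurs (k : fieldType) (n : nat) (h : {mpoly k[n]}) (j : 'I_n) : bool :=
  has (fun mm : 'X_{1..n} => (0 < mm j)%N) (msupp h).

Definition terms_with (k : fieldType) (n : nat) (h : {mpoly k[n]}) (j : 'I_n)
  : {mpoly k[n]} :=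
  \sum_(mm <- msupp h | (0 < mm j)%N) h@_mm *: 'X_[mm].

Definition Ty (k : fieldType) (m : nat) (h : Rm k m) : Rm k m :=
  if [exists i : 'I_m.+1, occurs h (yidx i)] then
    terms_with h (yidx (inord (\max_(i < m.+1 | occurs h (yidx i)) (i : nat))))
  else 0.

Definition Tz (k : fieldType) (m : nat) (h : Rm k m) : Rm k m :=
  if [exists i : 'I_m.+1, occurs h (zidx i)] then
    terms_with h (zidx (inord (\max_(i < m.+1 | occurs h (zidx i)) (i : nat))))
  else 0.

(* Main.v *)
Require Import Defs.
From mathcomp Require Import all_boot all_order all_algebra.
From mathcomp Require Import mpoly.
From mathcomp Require Import zify.
Import GRing.Theory.
Local Open Scope ring_scope.

Lemma sqr_sum2 (S : comNzRingType) (h2 : 2%:R = 0 :> S) (I : finType) (P : pred I) (F : I -> S) :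
  (\sum_(i | P i) F i) ^+ 2 = \sum_(i | P i) F i ^+ 2.
Proof.
apply: (big_morph (fun a : S => a ^+ 2)) => [a b|]; last by rewrite expr0n.
by rewrite sqrrD -mulr_natr h2 mulr0 addr0.
Qed.

Lemma coef1 (R : nzRingType) (I : finType) (P : pred I) (c : I -> R) (e : I -> nat) l :
  (\sum_(i | P i) (c i)%:P * 'X^(e i))`_l = \sum_(i | P i && (e i == l)%N) c i.
Proof.
rewrite coef_sum big_mkcondr /=; apply: eq_bigr => i _.
by rewrite coefCM coefXn eq_sym; case: (_ == _); rewrite ?mulr1 ?mulr0.
Qed.

Lemma coef2 (R : nzRingType) (I J : finType) (P : pred I) (Q : pred J) (c : I -> J -> R)
  (e : I -> J -> nat) l :
  (\sum_(i | P i) \sum_(j | Q j) (c i j)%:P * 'X^(e i j))`_l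
  = \sum_i \sum_(j | [&& P i, Q j & (e i j == l)%N]) c i j.
Proof.
rewrite coef_sum big_mkcond /=; apply: eq_bigr => i _.
case: (P i) => /=; first by rewrite coef1.
by rewrite big_pred0.
Qed.

Lemma coef3 (R : nzRingType) (I J K : finType) (P : pred I) (Q : pred J) (T : pred K)
  (c : I -> J -> K -> R) (e : I -> J -> K -> nat) l :
  (\sum_(i | P i) \sum_(j | Q j) \sum_(h | T h) (c i j h)%:P * 'X^(e i j h))`_l
  = \sum_i \sum_j \sum_(h | [&& P i, Q j, T h & (e i j h == l)%N]) c i j h.
Proof.
rewrite coef_sum big_mkcond /=; apply: eq_bigr => i _.
case: (P i) => /=; last by rewrite big1 // => j _; rewrite big_pred0.
by rewrite coef2.
Qed.

Lemma mulCX (R : comNzRingType) (a b : R) i j :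
  (a%:P * 'X^i) * (b%:P * 'X^j) = (a * b)%:P * 'X^(i + j).
Proof. by rewrite polyCM exprD mulrACA. Qed.

Lemma sqrCX (R : comNzRingType) (a : R) i :
  (a%:P * 'X^i) ^+ 2 = (a ^+ 2)%:P * 'X^(2 * i).
Proof. by rewrite expr2 mulCX -expr2 addnn -mul2n. Qed.

Lemma two0 (k : fieldType) (hk : (2 \in [pchar k])%N) m : 2%:R = 0 :> {poly Rm k m}.
Proof. by rewrite -polyC_natr -mpolyC_nat (pcharf0 hk) mpolyC0 polyC0. Qed.

Lemma Gformula (k : fieldType) (hk : (2 \in [pchar k])%N) (m p q r l : nat) :
  let x := @xv k m in let y := @yv k m in let z := @zv k m in
  Gpqr k m p q r l = \sum_(u < m.+1 | (p <= u)%N && (2 * u == l)%N) x u ^+ 2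
      + \sum_(v < m.+1) \sum_(w < m.+1 | [&& (q <= v)%N, (r <= w)%N & (2 * v + w == l)%N])
          y v ^+ 2 * z w
      + \sum_(v < m.+1) \sum_(w < m.+1 | [&& (q <= v)%N, (r <= w)%N & (v + 2 * w == l)%N])
          y v * z w ^+ 2
      + \sum_(u < m.+1) \sum_(v < m.+1) \sum_(w < m.+1
            | [&& (p <= u)%N, (q <= v)%N, (r <= w)%N & (u + v + w == l)%N])
          x u * y v * z w.
Proof.
move=> x y z.
rewrite /Gpqr /gpoly /tser !coefD.
have h2 := @two0 k hk m.
congr (_ + _ + _ + _).
- rewrite sqr_sum2 //.
  under eq_bigr do rewrite sqrCX.
  by rewrite coef1.
- rewrite sqr_sum2 // big_distrlr /=.
  under eq_bigr do under eq_bigr do rewrite sqrCX mulCX.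
  by rewrite coef2.
- rewrite sqr_sum2 // big_distrlr /=.
  under eq_bigr do under eq_bigr do rewrite sqrCX mulCX.
  by rewrite coef2.
- rewrite big_distrlr /= big_distrl /=.
  under eq_bigr do rewrite big_distrl /=.
  under eq_bigr do under eq_bigr do rewrite big_distrr /=.
  under eq_bigr do under eq_bigr do under eq_bigr do rewrite !mulCX.
  by rewrite coef3.
Qed.

Lemma mcoeff_tw (k : fieldType) n (h : {mpoly k[n]}) j mm :
  (terms_with h j)@_mm = if (0 < mm j)%N then h@_mm else 0.
Proof.
rewrite /terms_with (big_morph (mcoeff mm) (mcoeffD mm) (mcoeff0 _ mm)).
under eq_bigr do rewrite mcoeffZ mcoeffX.
case: (boolP (mm \in msupp h)) => Hin.
- rewrite big_mkcond (bigD1_seq mm) ?msupp_uniq //= eqxx mulr1 big1 ?addr0.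
    by case: ifP.
  move=> mm' /negbTE ne; rewrite ne mulr0; by case: ifP.
- have h0 : h@_mm = 0 by apply/eqP; rewrite mcoeff_eq0.
  rewrite h0 if_same big1 // => mm' _.
  by case: (eqVneq mm' mm) => [->|]; rewrite ?h0 ?mul0r // mulr0.
Qed.

Lemma tw_add (k : fieldType) n (h1 h2 : {mpoly k[n]}) j :
  terms_with (h1 + h2) j = terms_with h1 j + terms_with h2 j.
Proof. by apply/mpolyP => mm; rewrite mcoeffD !mcoeff_tw mcoeffD; case: ifP; rewrite ?addr0. Qed.

Lemma tw0 (k : fieldType) n j : terms_with (0 : {mpoly k[n]}) j = 0.
Proof. by apply/mpolyP => mm; rewrite mcoeff_tw mcoeff0; case: ifP. Qed.

Lemma tw_sum (k : fieldType) n (I : finType) (P : pred I) (F : I -> {mpoly k[n]}) j :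
  terms_with (\sum_(i | P i) F i) j = \sum_(i | P i) terms_with (F i) j.
Proof. by apply: (big_morph (fun h => terms_with h j)) => [a b|]; rewrite ?tw_add ?tw0. Qed.

Lemma twX (k : fieldType) n (mm : 'X_{1..n}) j :
  terms_with ('X_[mm] : {mpoly k[n]}) j = if (0 < mm j)%N then 'X_[mm] else 0.
Proof.
apply/mpolyP => mm'; rewrite mcoeff_tw mcoeffX.
case: (eqVneq mm mm') => [<-|ne]; case: (0 < _ j)%N; case: (0 < _ j)%N;
  by rewrite ?mcoeffX ?mcoeff0 ?eqxx ?(negbTE ne).
Qed.

Lemma occursE (k : fieldType) n (h : {mpoly k[n]}) j : occurs h j = (terms_with h j != 0).
Proof.
apply/idP/idP.
- case/hasP => mm Hin Hpos; apply/eqP => /mpolyP/(_ mm).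
  rewrite mcoeff_tw Hpos mcoeff0 => /eqP; rewrite mcoeff_eq0 Hin.
  by [].
- apply: contraR => /hasPn H; apply/eqP/mpolyP => mm.
  rewrite mcoeff_tw mcoeff0; case: ifP => // Hpos; apply/eqP; rewrite mcoeff_eq0.
  by apply/negP => Hin; move: (H mm Hin); rewrite Hpos.
Qed.

Lemma tw3 (k : fieldType) n (a b c j : 'I_n) :
  terms_with ('X_a * 'X_b * 'X_c : {mpoly k[n]}) j
  = if [|| a == j, b == j | c == j] then 'X_a * 'X_b * 'X_c else 0.
Proof.
rewrite -!mpolyXD twX !mnmDE !mnm1E.
by case: (a == j); case: (b == j); case: (c == j).
Qed.

Lemma tw2 (k : fieldType) n (a b j : 'I_n) :
  terms_with ('X_a * 'X_b : {mpoly k[n]}) j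
  = if (a == j) || (b == j) then 'X_a * 'X_b else 0.
Proof.
rewrite -!mpolyXD twX !mnmDE !mnm1E.
by case: (a == j); case: (b == j).
Qed.

Lemma X3_neq0 (k : fieldType) n (a b c : 'I_n) : ('X_a * 'X_b * 'X_c : {mpoly k[n]}) != 0.
Proof.
rewrite -!mpolyXD; apply/eqP => /mpolyP/(_ (U_(a) + U_(b) + U_(c))%MM).
rewrite mcoeffX eqxx mcoeff0; apply/eqP; exact: oner_neq0.
Qed.

Section Idx.
Variable m : nat.
Lemma yyE (v i : 'I_m.+1) : (yidx v == yidx i) = (v == i).
Proof. by rewrite -!val_eqE /= eqn_add2l. Qed.
Lemma zzE (v i : 'I_m.+1) : (zidx v == zidx i) = (v == i).
Proof. by rewrite -!val_eqE /= eqn_add2l. Qed.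
Lemma xyE (v i : 'I_m.+1) : (xidx v == yidx i) = false.
Proof. apply/negbTE; rewrite -!val_eqE /=; have := ltn_ord v; lia. Qed.
Lemma xzE (v i : 'I_m.+1) : (xidx v == zidx i) = false.
Proof. apply/negbTE; rewrite -!val_eqE /=; have := ltn_ord v; lia. Qed.
Lemma zyE (v i : 'I_m.+1) : (zidx v == yidx i) = false.
Proof. apply/negbTE; rewrite -!val_eqE /=; have := ltn_ord i; lia. Qed.
Lemma yzE (v i : 'I_m.+1) : (yidx v == zidx i) = false.
Proof. apply/negbTE; rewrite -!val_eqE /=; have := ltn_ord v; lia. Qed.
End Idx.

Lemma Ty_char (k : fieldType) m (h : Rm k m) (i0 : nat) M :
  (i0 <= m)%N -> terms_with h (yidx (inord i0)) = M -> M != 0 ->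
  (forall i : 'I_m.+1, (i0 < i)%N -> terms_with h (yidx i) = 0) -> Ty h = M.
Proof.
move=> hi0 hT hM hz.
have occ0 : occurs h (yidx (inord i0 : 'I_m.+1)) by rewrite occursE hT.
rewrite /Ty.
have -> : [exists i : 'I_m.+1, occurs h (yidx i)] by apply/existsP; exists (inord i0).
have -> : (\max_(i < m.+1 | occurs h (yidx i)) (i : nat)) = i0; last by [].
apply/eqP; rewrite eqn_leq; apply/andP; split.
- apply/bigmax_leqP => i occ; rewrite leqNgt; apply/negP => lt.
  by move: occ; rewrite occursE hz // eqxx.
- have := @leq_bigmax_cond _ (fun i : 'I_m.+1 => occurs h (yidx i)) (fun i : 'I_m.+1 => (i : nat)) _ occ0.
  by rewrite inordK.
Qed.

Lemma Tz_char (k : fieldType) m (h : Rm k m) (i0 : nat) M :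
  (i0 <= m)%N -> terms_with h (zidx (inord i0)) = M -> M != 0 ->
  (forall i : 'I_m.+1, (i0 < i)%N -> terms_with h (zidx i) = 0) -> Tz h = M.
Proof.
move=> hi0 hT hM hz.
have occ0 : occurs h (zidx (inord i0 : 'I_m.+1)) by rewrite occursE hT.
rewrite /Tz.
have -> : [exists i : 'I_m.+1, occurs h (zidx i)] by apply/existsP; exists (inord i0).
have -> : (\max_(i < m.+1 | occurs h (zidx i)) (i : nat)) = i0; last by [].
apply/eqP; rewrite eqn_leq; apply/andP; split.
- apply/bigmax_leqP => i occ; rewrite leqNgt; apply/negP => lt.
  by move: occ; rewrite occursE hz // eqxx.
- have := @leq_bigmax_cond _ (fun i : 'I_m.+1 => occurs h (zidx i)) (fun i : 'I_m.+1 => (i : nat)) _ occ0.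
  by rewrite inordK.
Qed.

Section Terms.
Variables (k : fieldType) (m : nat).
Local Notation x := (@xv k m).
Local Notation y := (@yv k m).
Local Notation z := (@zv k m).

Lemma twY_x u i : terms_with (x u ^+ 2) (yidx i) = 0.
Proof. by rewrite /xv expr2 tw2 !xyE. Qed.
Lemma twY_yyz v w i :
  terms_with (y v ^+ 2 * z w) (yidx i) = if v == i then y v ^+ 2 * z w else 0.
Proof. by rewrite /yv /zv expr2 tw3 !yyE zyE; case: (_ == i). Qed.
Lemma twY_yzz v w i :
  terms_with (y v * z w ^+ 2) (yidx i) = if v == i then y v * z w ^+ 2 else 0.
Proof. by rewrite /yv /zv expr2 mulrA tw3 !yyE zyE; case: (_ == i). Qed.
Lemma twY_xyz u v w i :
  terms_with (x u * y v * z w) (yidx i) = if v == i then x u * y v * z w else 0.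
Proof. by rewrite /xv /yv /zv tw3 !yyE zyE xyE; case: (_ == i). Qed.

Lemma twZ_x u i : terms_with (x u ^+ 2) (zidx i) = 0.
Proof. by rewrite /xv expr2 tw2 !xzE. Qed.
Lemma twZ_yyz v w i :
  terms_with (y v ^+ 2 * z w) (zidx i) = if w == i then y v ^+ 2 * z w else 0.
Proof. by rewrite /yv /zv expr2 tw3 !zzE yzE; case: (_ == i). Qed.
Lemma twZ_yzz v w i :
  terms_with (y v * z w ^+ 2) (zidx i) = if w == i then y v * z w ^+ 2 else 0.
Proof. by rewrite /yv /zv expr2 mulrA tw3 !zzE yzE; case: (_ == i). Qed.
Lemma twZ_xyz u v w i :
  terms_with (x u * y v * z w) (zidx i) = if w == i then x u * y v * z w else 0.
Proof. by rewrite /xv /yv /zv tw3 !zzE yzE xzE; case: (_ == i). Qed.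
End Terms.

Lemma sum2_single (V : zmodType) n (C : 'I_n -> 'I_n -> bool) (P : 'I_n -> 'I_n -> bool)
    (F : 'I_n -> 'I_n -> V) a b :
  C a b -> P a b -> (forall v w, C v w -> P v w -> v = a /\ w = b) ->
  \sum_v \sum_(w | C v w) (if P v w then F v w else 0) = F a b.
Proof.
move=> hC hP hu.
rewrite (bigD1 a) //= (bigD1 b) //= hP big1 ?addr0.
- rewrite big1 ?addr0 // => v ne; apply: big1 => w hc; case: ifP => // hp.
  by have [e _] := hu _ _ hc hp; rewrite e eqxx in ne.
- move=> w /andP[hc ne]; case: ifP => // hp.
  by have [_ e] := hu _ _ hc hp; rewrite e eqxx in ne.
Qed.

Lemma sum2_single0 (V : zmodType) n (C : 'I_n -> 'I_n -> bool)
    (F : 'I_n -> 'I_n -> V) a b :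
  C a b -> (forall v w, C v w -> v = a /\ w = b) ->
  \sum_v \sum_(w | C v w) F v w = F a b.
Proof.
move=> hC hu; rewrite -(@sum2_single V n C (fun _ _ => true) F a b) //.
by move=> v w hc _; apply: hu.
Qed.

Lemma eq4 (V : zmodType) (a b c d e : V) : a = e -> b = 0 -> c = 0 -> d = 0 -> a + b + c + d = e.
Proof. by move=> -> -> -> ->; rewrite !addr0. Qed.
Lemma eq4' (V : zmodType) (a b c d e f g : V) :
  a = e -> b = f -> c = g -> d = 0 -> a + b + c + d = e + f + g.
Proof. by move=> -> -> -> ->; rewrite !addr0. Qed.
Lemma eq3a (V : zmodType) (a b c e : V) : a = e -> b = 0 -> c = 0 -> a + b + c = e.
Proof. by move=> -> -> ->; rewrite !addr0. Qed.
Lemma eq3b (V : zmodType) (a b c e : V) : a = 0 -> b = e -> c = 0 -> a + b + c = e.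
Proof. by move=> -> -> ->; rewrite addr0 add0r. Qed.

Lemma ordE m (v : 'I_m.+1) n : (n <= m)%N -> (v : nat) = n -> v = inord n.
Proof. by move=> hn hv; apply/val_inj; rewrite /= inordK. Qed.

Ltac k1 := apply: big1 => ? /andP[? /eqP ?]; exfalso; lia.
Ltac k2 := apply: big1 => ? _; apply: big1 => ? /and3P[? ? /eqP ?]; exfalso; lia.
Ltac k3 := apply: big1 => ? _; apply: big1 => ? _; apply: big1 => ? /and4P[? ? ? /eqP ?];
  exfalso; lia.
Ltac fin := move=> /(congr1 (@nat_of_ord _)) /=; rewrite ?inordK; try (move=> ?; exfalso); lia.
Ltac k2v := apply: big1 => ? _; apply: big1 => ? /and3P[? ? /eqP ?]; case: eqP => //; fin.
Ltac k3v := apply: big1 => ? _; apply: big1 => ? _; apply: big1 => ? /and4P[? ? ? /eqP ?];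
  case: eqP => //; fin.

Section Main.
Variables (k : fieldType) (hk : (2 \in [pchar k])%N) (m p q r l : nat).
Local Notation x := (@xv k m).
Local Notation y := (@yv k m).
Local Notation z := (@zv k m).
Local Notation G := (Gpqr k m p q r l).

Lemma GF : G = \sum_(u < m.+1 | (p <= u)%N && (2 * u == l)%N) x u ^+ 2
      + \sum_(v < m.+1) \sum_(w < m.+1 | [&& (q <= v)%N, (r <= w)%N & (2 * v + w == l)%N])
          y v ^+ 2 * z w
      + \sum_(v < m.+1) \sum_(w < m.+1 | [&& (q <= v)%N, (r <= w)%N & (v + 2 * w == l)%N])
          y v * z w ^+ 2
      + \sum_(u < m.+1) \sum_(v < m.+1) \sum_(w < m.+1
            | [&& (p <= u)%N, (q <= v)%N, (r <= w)%N & (u + v + w == l)%N])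
          x u * y v * z w.
Proof. exact: (@Gformula k hk m p q r l). Qed.

Lemma twG_y i : terms_with G (yidx i) =
  \sum_(v < m.+1) \sum_(w < m.+1 | [&& (q <= v)%N, (r <= w)%N & (2 * v + w == l)%N])
          (if v == i then y v ^+ 2 * z w else 0)
  + \sum_(v < m.+1) \sum_(w < m.+1 | [&& (q <= v)%N, (r <= w)%N & (v + 2 * w == l)%N])
          (if v == i then y v * z w ^+ 2 else 0)
  + \sum_(u < m.+1) \sum_(v < m.+1) \sum_(w < m.+1
            | [&& (p <= u)%N, (q <= v)%N, (r <= w)%N & (u + v + w == l)%N])
          (if v == i then x u * y v * z w else 0).
Proof.
rewrite GF !tw_add tw_sum big1 ?add0r; last by move=> u _; exact: twY_x.
congr (_ + _ + _); rewrite tw_sum; apply: eq_bigr => u _; rewrite tw_sum; apply: eq_bigr => v _.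
- exact: twY_yyz.
- exact: twY_yzz.
- rewrite tw_sum; apply: eq_bigr => w _; exact: twY_xyz.
Qed.

Lemma twG_z i : terms_with G (zidx i) =
  \sum_(v < m.+1) \sum_(w < m.+1 | [&& (q <= v)%N, (r <= w)%N & (2 * v + w == l)%N])
          (if w == i then y v ^+ 2 * z w else 0)
  + \sum_(v < m.+1) \sum_(w < m.+1 | [&& (q <= v)%N, (r <= w)%N & (v + 2 * w == l)%N])
          (if w == i then y v * z w ^+ 2 else 0)
  + \sum_(u < m.+1) \sum_(v < m.+1) \sum_(w < m.+1
            | [&& (p <= u)%N, (q <= v)%N, (r <= w)%N & (u + v + w == l)%N])
          (if w == i then x u * y v * z w else 0).
Proof.
rewrite GF !tw_add tw_sum big1 ?add0r; last by move=> u _; exact: twZ_x.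
congr (_ + _ + _); rewrite tw_sum; apply: eq_bigr => u _; rewrite tw_sum; apply: eq_bigr => v _.
- exact: twZ_yyz.
- exact: twZ_yzz.
- rewrite tw_sum; apply: eq_bigr => w _; exact: twZ_xyz.
Qed.

Lemma yzz_neq0 a b : y a * z b ^+ 2 != 0.
Proof. by rewrite /yv /zv expr2 mulrA X3_neq0. Qed.
Lemma yyz_neq0 a b : y a ^+ 2 * z b != 0.
Proof. by rewrite /yv /zv expr2 X3_neq0. Qed.

End Main.

Theorem lemma4p4 (k : fieldType) (hk : (2 \in [pchar k])%N) (m p q r l : nat)
    (hp : (0 < p <= m.+1)%N) (hq : (0 < q <= m.+1)%N) (hr : (0 < r <= m.+1)%N)
    (hl : (l <= m)%N) :
  let x := @xv k m in let y := @yv k m in let z := @zv k m in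
  let G := Gpqr k m p q r l in
  G = \sum_(u < m.+1 | (p <= u)%N && (2 * u == l)%N) x u ^+ 2
      + \sum_(v < m.+1) \sum_(w < m.+1 | [&& (q <= v)%N, (r <= w)%N & (2 * v + w == l)%N])
          y v ^+ 2 * z w
      + \sum_(v < m.+1) \sum_(w < m.+1 | [&& (q <= v)%N, (r <= w)%N & (v + 2 * w == l)%N])
          y v * z w ^+ 2
      + \sum_(u < m.+1) \sum_(v < m.+1) \sum_(w < m.+1
            | [&& (p <= u)%N, (q <= v)%N, (r <= w)%N & (u + v + w == l)%N])
          x u * y v * z w
  /\ ([&& (l < 2 * p)%N, (l < 2 * q + r)%N & (l < q + 2 * r)%N] -> G = 0)
  /\ ([&& (l == 2 * p)%N, (l < 2 * q + r)%N & (l < q + 2 * r)%N] -> G = x (inord p) ^+ 2)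
  /\ ((q < p)%N -> q = r -> (l == 2 * p)%N -> (l == 3 * q)%N ->
        G = x (inord p) ^+ 2 + y (inord q) ^+ 2 * z (inord q) + y (inord q) * z (inord q) ^+ 2)
  /\ ((q <= p)%N -> (r < q)%N -> (2 * p <= l)%N -> (2 * p == q + 2 * r)%N ->
        Ty G = y (inord (l - 2 * r)) * z (inord r) ^+ 2)
  /\ ((r <= p)%N -> (q < r)%N -> (2 * p <= l)%N -> (2 * p == 2 * q + r)%N ->
        Tz G = y (inord q) ^+ 2 * z (inord (l - 2 * q)))
  /\ ((q < p)%N -> q = r -> (3 * q < l)%N ->
        Ty G = y (inord (l - 2 * q)) * z (inord q) ^+ 2)
  /\ ((q < p)%N -> q = r -> (3 * q < l)%N ->
        Tz G = y (inord q) ^+ 2 * z (inord (l - 2 * q))).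
Proof.
cbv zeta.
move: hp hq hr => /andP[hp1 hp2] /andP[hq1 hq2] /andP[hr1 hr2].
have xsum1 : (l == 2 * p)%N ->
    \sum_(u < m.+1 | (p <= u)%N && (2 * u == l)%N) @xv k m u ^+ 2 = @xv k m (inord p) ^+ 2.
  move=> /eqP hlp; rewrite (big_pred1 (inord p)) // => u /=.
  rewrite -val_eqE /= inordK; lia.
split; first exact: (@GF k hk m p q r l).
split.
  move=> /and3P[h1 h2 h3]; rewrite (@GF k hk m p q r l). apply: eq4; [k1|k2|k2|k3].
split.
  move=> /and3P[h1 h2 h3]; rewrite (@GF k hk m p q r l); apply: eq4; [exact: xsum1|k2|k2|k3].
split.
  move=> h1 h2 h3 /eqP h4; rewrite (@GF k hk m p q r l); subst r; apply: eq4'; [exact: xsum1| | |k3].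
  - apply: sum2_single0; first by rewrite !inordK; lia.
    move=> v w /and3P[? ? /eqP ?]; split; apply: ordE; lia.
  - apply: sum2_single0; first by rewrite !inordK; lia.
    move=> v w /and3P[? ? /eqP ?]; split; apply: ordE; lia.
split.
  move=> h1 h2 h3 /eqP h4; apply: (@Ty_char _ _ _ (l - 2 * r)); first lia.
  - rewrite (@twG_y k hk m p q r l); apply: eq3b; [k2v| |k3v].
    apply: sum2_single; first (by rewrite !inordK; lia); first by rewrite eqxx.
    move=> v w /and3P[? ? /eqP ?] /eqP hv; move: (congr1 (@nat_of_ord _) hv) => /=.
    rewrite inordK; last lia.
    by move=> ?; split; apply: ordE; lia.
  - exact: yzz_neq0.
  - move=> i hi; rewrite (@twG_y k hk m p q r l); apply: eq3a; [k2v|k2v|k3v].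
split.
  move=> h1 h2 h3 /eqP h4; apply: (@Tz_char _ _ _ (l - 2 * q)); first lia.
  - rewrite (@twG_z k hk m p q r l); apply: eq3a; [|k2v|k3v].
    apply: sum2_single; first (by rewrite !inordK; lia); first by rewrite eqxx.
    move=> v w /and3P[? ? /eqP ?] /eqP hv; move: (congr1 (@nat_of_ord _) hv) => /=.
    rewrite inordK; last lia.
    by move=> ?; split; apply: ordE; lia.
  - exact: yyz_neq0.
  - move=> i hi; rewrite (@twG_z k hk m p q r l); apply: eq3a; [k2v|k2v|k3v].
split.
  move=> h1 h2 h3; subst r; apply: (@Ty_char _ _ _ (l - 2 * q)); first lia.
  - rewrite (@twG_y k hk m p q q l); apply: eq3b; [k2v| |k3v].
    apply: sum2_single; first (by rewrite !inordK; lia); first by rewrite eqxx.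
    move=> v w /and3P[? ? /eqP ?] /eqP hv; move: (congr1 (@nat_of_ord _) hv) => /=.
    rewrite inordK; last lia.
    by move=> ?; split; apply: ordE; lia.
  - exact: yzz_neq0.
  - move=> i hi; rewrite (@twG_y k hk m p q q l); apply: eq3a; [k2v|k2v|k3v].
move=> h1 h2 h3; subst r; apply: (@Tz_char _ _ _ (l - 2 * q)); first lia.
- rewrite (@twG_z k hk m p q q l); apply: eq3a; [|k2v|k3v].
  apply: sum2_single; first (by rewrite !inordK; lia); first by rewrite eqxx.
  move=> v w /and3P[? ? /eqP ?] /eqP hv; move: (congr1 (@nat_of_ord _) hv) => /=.
  rewrite inordK; last lia.
  by move=> ?; split; apply: ordE; lia.
- exact: yyz_neq0.
- move=> i hi; rewrite (@twG_z k hk m p q q l); apply: eq3a; [k2v|k2v|k3v].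
Qed.
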